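(* Let $b$ be a prime, $s,m\in\mathbb{N}$, and let $C_1^{(m)},\dots,C_s^{(m)}$ be the left upper $m\times m$ submatrices of the generating matrices of a digital $(t,s)$-sequence over $\mathbb{F}_b$, $m\ge t$. Let $0=w^r_1\le\dots\le w^r_s$ (row reduction indices) and $0=w^c_1\le\dots\le w^c_s$ (column reduction indices), and let $\widetilde{C}_j^{(m)}$ be obtained from $C_j^{(m)}$ by setting its last $\min(m,w^r_j)$ rows and its last $\min(m,w^c_j)$ columns to zero. Let $\widetilde{t}$ be the minimal quality parameter of the digital net generated by $\widetilde{C}_1^{(m)},\dots,\widetilde{C}_s^{(m)}$. Then \[ \max\{0,\,m-\max\{w^c_s+t,\,w^r_s\}\}\le\rho_m\big(\widetilde{C}_1^{(m)},\dots,\widetilde{C}_s^{(m)}\big)\le\max\{0,\,m-\max\{w^c_s,w^r_s\}\}, \] and $\widetilde{t}\le\min\{m,\max\{w^c_s+t,\,w^r_s\}\}$.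
   Context: A $(t,m,s)$-net in base $b$ is a set of $b^m$ points in $[0,1)^s$ such that every elementary interval $\prod_j[a_jb^{-d_j},(a_j+1)b^{-d_j})$ of volume $b^{t-m}$ contains exactly $b^t$ points. Digital net generated by $C_1^{(m)},\dots,C_s^{(m)}\in\mathbb{F}_b^{m\times m}$: points $\boldsymbol{x}_k$, $0\le k<b^m$, with $x_{k,j}=(C_j^{(m)}\vec{k})\cdot(b^{-1},\dots,b^{-m})$, $\vec k$ the base-$b$ digit vector of $k$, arithmetic over $\mathbb{F}_b\cong\{0,\dots,b-1\}$; its minimal quality parameter is the least $t$ for which it is a $(t,m,s)$-net. A digital $(t,s)$-sequence over $\mathbb{F}_b$ is generated by infinite matrices $C_1,\dots,C_s$ over $\mathbb{F}_b$ (point $k$: $x_{k,j}=(C_j\vec k)\cdot(b^{-1},b^{-2},\dots)$) such that for every $m'\ge t$ and $k\ge0$ the points with indices $kb^{m'},\dots,kb^{m'}+b^{m'}-1$ form a $(t,m',s)$-net. The linear independence parameter $\rho_m(C_1^{(m)},\dots,C_s^{(m)})$ is the largest $d$ such that for all $d_1,\dots,d_s\in\mathbb{N}_0$ with $\sum d_j=d$ the first $d_j$ rows of $C_j^{(m)}$, $1\le j\le s$, are jointly linearly independent over $\mathbb{F}_b$. *)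

(* Defs.v *)
From HB Require Import structures.
From mathcomp Require Import all_boot all_order all_algebra.

Import Order.TTheory GRing.Theory Num.Theory.
Local Open Scope ring_scope.

Definition digit (b k l : nat) : 'F_b := (((k %/ b ^ l) %% b)%N)%:R.

Definition bval (b m : nat) (y : 'I_m -> 'F_b) : rat :=
  \sum_(i < m) (nat_of_ord (y i))%:R / (b ^ i.+1)%:R.

Definition dnet_point (b m s : nat) (M : 'I_s -> 'M['F_b]_m) (k : nat) (j : 'I_s) : rat :=
  bval b m (fun i : 'I_m => \sum_(l < m) M j i l * digit b k l).

Definition is_net (b t m s : nat) (x : nat -> 'I_s -> rat) : Prop :=
  (t <= m)%N /\
  (forall i j, (i < b ^ m)%N -> 0 <= x i j < 1) /\
  forall d a : 'I_s -> nat,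
    (\sum_(j < s) d j)%N = (m - t)%N ->
    (forall j, a j < b ^ d j)%N ->
    #|[set i : 'I_(b ^ m) | [forall j : 'I_s,
         ((a j)%:R / (b ^ d j)%:R <= x i j) &&
         (x i j < (a j).+1%:R / (b ^ d j)%:R)]]| = (b ^ t)%N.

Definition is_min_quality (b m s : nat) (x : nat -> 'I_s -> rat) (tt : nat) : Prop :=
  is_net b tt m s x /\ forall t', is_net b t' m s x -> (tt <= t')%N.

(* Infinite generating matrices: C j i l is the entry in row i, column l
   (0-based) of C_j.  Point n of the sequence, truncated to its first m digits
   (b-adic truncation [x_n]_{b,m}); the digits of n at positions l >= n.+1
   vanish, so the sum over l < n.+1 is the full product C_j * digitvector(n). *)
Definition dseq_point_trunc (b s : nat) (C : 'I_s -> nat -> nat -> 'F_b)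
    (m n : nat) (j : 'I_s) : rat :=
  bval b m (fun i : 'I_m => \sum_(l < n.+1) C j i l * digit b n l).

Definition is_digital_ts_seq (b t s : nat) (C : 'I_s -> nat -> nat -> 'F_b) : Prop :=
  forall m', (t <= m')%N -> forall k : nat,
    is_net b t m' s (fun i j => dseq_point_trunc b s C m' (k * b ^ m' + i) j).

Definition upleft (b s m : nat) (C : 'I_s -> nat -> nat -> 'F_b) (j : 'I_s) : 'M['F_b]_m :=
  \matrix_(i < m, l < m) C j i l.

Definition rows_indep (b m s : nat) (M : 'I_s -> 'M['F_b]_m) (d : 'I_s -> nat) : Prop :=
  (forall j, d j <= m)%N /\
  forall c : 'I_s -> 'I_m -> 'F_b,
    \sum_(j < s) \sum_(i < m | (i < d j)%N) c j i *: row i (M j) = 0 ->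
    forall j (i : 'I_m), (i < d j)%N -> c j i = 0.

Definition rho_ok (b m s : nat) (M : 'I_s -> 'M['F_b]_m) (r : nat) : Prop :=
  forall d : 'I_s -> nat, (\sum_(j < s) d j)%N = r -> rows_indep b m s M d.

Definition is_rho (b m s : nat) (M : 'I_s -> 'M['F_b]_m) (r : nat) : Prop :=
  rho_ok b m s M r /\ forall r', rho_ok b m s M r' -> (r' <= r)%N.

Definition reduce (b m : nat) (M : 'M['F_b]_m) (wr wc : nat) : 'M['F_b]_m :=
  \matrix_(i < m, l < m) if (i < m - wr)%N && (l < m - wc)%N then M i l else 0.

(* Main.v *)
Require Import Defs.
From Stdlib Require Import Classical.
From mathcomp Require Import all_boot all_order all_algebra.
From mathcomp Require Import zify ring lra.
Import Order.TTheory GRing.Theory Num.Theory.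
Local Open Scope ring_scope.



Fixpoint pre (b : nat) (Y : nat -> nat) (k : nat) : nat :=
  if k is k'.+1 then (b * pre b Y k' + Y k')%N else 0%N.

Lemma pre_lt b Y k : (forall i, i < k -> Y i < b)%N -> (pre b Y k < b ^ k)%N.
Proof.
elim: k => [|k IH] HY /=; first by rewrite expn0.
have H1 : (pre b Y k < b ^ k)%N by apply: IH => i Hi; apply: HY; lia.
have H2 : (Y k < b)%N by apply: HY.
rewrite expnS.
have : (b * (pre b Y k).+1 <= b * b ^ k)%N by rewrite leq_mul2l H1 orbT.
nia.
Qed.

Lemma pre_add b Y d k :
  pre b Y (d + k) = (pre b Y d * b ^ k + pre b (fun i => Y (d + i)) k)%N.
Proof.
elim: k => [|k IH] /=; first by rewrite addn0 expn0 muln1 addn0.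
rewrite addnS /= IH expnS; ring.
Qed.

Lemma pre_div b Y d m : (0 < b)%N -> (forall i, i < m -> Y i < b)%N -> (d <= m)%N ->
  (pre b Y m %/ b ^ (m - d))%N = pre b Y d.
Proof.
move=> b0 HY Hdm.
have -> : m = (d + (m - d))%N by lia.
rewrite pre_add addKn divnMDl ?expn_gt0 ?b0 // divn_small ?addn0 //.
apply: pre_lt => i Hi; apply: HY; lia.
Qed.

Lemma pre_digits b Y d a : (0 < b)%N -> (forall i, i < d -> Y i < b)%N -> (a < b ^ d)%N ->
  (pre b Y d = a) <-> (forall i, i < d -> Y i = (a %/ b ^ (d - i.+1)) %% b)%N.
Proof.
move=> b0; elim: d a => [|d IH] a HY Ha /=.
  split=> [_ i //|_]; rewrite expn0 in Ha; lia.
have HYd : (Y d < b)%N by apply: HY.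
have HY' : (forall i, i < d -> Y i < b)%N by move=> i Hi; apply: HY; lia.
have Ha' : (a %/ b < b ^ d)%N by rewrite ltn_divLR // -expnSr.
split.
  move=> Hpre.
  have Hmod : Y d = (a %% b)%N by rewrite -Hpre mulnC modnMDl modn_small.
  have Hdiv : pre b Y d = (a %/ b)%N.
    by rewrite -Hpre mulnC divnMDl // divn_small ?addn0.
  move=> i Hi.
  case: (ltnP i d) => Hid.
    rewrite ((IH (a %/ b)%N HY' Ha').1 Hdiv i Hid) -divnMA -expnS.
    congr (_ %/ _ %% _)%N; congr (_ ^ _)%N; lia.
  have -> : i = d by lia.
  by rewrite subnn expn0 divn1.
move=> Hd.
have Hdiv : pre b Y d = (a %/ b)%N.
  apply/(IH (a %/ b)%N HY' Ha') => i Hi.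
  rewrite (Hd i (ltnW (leq_trans Hi (leqnn _)))) -divnMA -expnS.
  congr (_ %/ _ %% _)%N; congr (_ ^ _)%N; lia.
rewrite Hdiv (Hd d (leqnn _)) subnn expn0 divn1 mulnC -divn_eq //.
Qed.



Lemma sum_pre (b : nat) (Y : nat -> nat) m : (0 < b)%N ->
  \sum_(i < m) ((Y i)%:R / (b ^ i.+1)%:R : rat) = (pre b Y m)%:R / (b ^ m)%:R.
Proof.
move=> b0; elim: m => [|m IH]; first by rewrite big_ord0 /= mul0r.
rewrite big_ord_recr /= IH.
have Hb : (b%:R : rat) != 0 by rewrite pnatr_eq0 -lt0n.
have Hbm : ((b ^ m)%:R : rat) != 0 by rewrite pnatr_eq0 -lt0n expn_gt0 b0.
rewrite !natrD !natrM !expnS !natrM; field.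
by rewrite Hb Hbm.
Qed.

Lemma box_nat (b m d a P : nat) : (0 < b)%N -> (d <= m)%N ->
  (((a%:R / (b ^ d)%:R : rat) <= P%:R / (b ^ m)%:R) &&
   ((P%:R / (b ^ m)%:R : rat) < a.+1%:R / (b ^ d)%:R)) = (P %/ b ^ (m - d) == a)%N.
Proof.
move=> b0 Hdm.
have Hq : (0 < b ^ (m - d))%N by rewrite expn_gt0 b0.
have HM : (0 < (b ^ m)%:R :> rat) by rewrite ltr0n expn_gt0 b0.
have Em : (b ^ m = b ^ d * b ^ (m - d))%N by rewrite -expnD subnKC.
have Hbd : ((b ^ d)%:R : rat) != 0 by rewrite pnatr_eq0 -lt0n expn_gt0 b0.
have Hbq : ((b ^ (m - d))%:R : rat) != 0 by rewrite pnatr_eq0 -lt0n.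
have E1 : forall x : nat, (x%:R / (b ^ d)%:R : rat) = (x * b ^ (m - d))%:R / (b ^ m)%:R.
  by move=> x; rewrite Em !natrM; field; rewrite Hbd Hbq.
rewrite !E1 ler_pM2r ?invr_gt0 // ltr_pM2r ?invr_gt0 // ler_nat ltr_nat.
by rewrite eqn_leq -[(_ %/ _ <= a)%N]ltnS ltn_divLR // leq_divRL // andbC.
Qed.

Definition ext (b m : nat) (y : 'I_m -> 'F_b) (i : nat) : nat :=
  if (insub i : option 'I_m) is Some i' then nat_of_ord (y i') else 0%N.
Arguments ext {b m}.

Lemma ext_ord b m (y : 'I_m -> 'F_b) (i : 'I_m) : ext y i = y i.
Proof. by rewrite /ext valK. Qed.

Lemma Fp_lt b (x : 'F_b) : prime b -> (nat_of_ord x < b)%N.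
Proof. move=> pb; rewrite -[X in (_ < X)%N](Fp_cast pb); exact: ltn_ord. Qed.

Lemma ext_lt b m (y : 'I_m -> 'F_b) i : prime b -> (ext y i < b)%N.
Proof.
move=> pb; rewrite /ext; case: insub => [i'|]; first exact: Fp_lt.
by rewrite prime_gt0.
Qed.

Lemma bval_pre b m (y : 'I_m -> 'F_b) : (0 < b)%N ->
  bval b m y = (pre b (ext y) m)%:R / (b ^ m)%:R.
Proof.
move=> b0; rewrite /bval -sum_pre //; apply: eq_bigr => i _; by rewrite ext_ord.
Qed.

Lemma bval_range b m (y : 'I_m -> 'F_b) : prime b -> 0 <= bval b m y < 1.
Proof.
move=> pb; have b0 := prime_gt0 pb.
rewrite bval_pre // divr_ge0 ?ler0n //= ltr_pdivrMr ?ltr0n ?expn_gt0 ?b0 //.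
by rewrite mul1r ltr_nat pre_lt // => i _; apply: ext_lt.
Qed.

Lemma Fp_eq b (x : 'F_b) n : prime b -> (x == n%:R) = (nat_of_ord x == n %% b)%N.
Proof.
move=> pb; rewrite -(inj_eq val_inj) /=.
by rewrite (val_Fp_nat pb).
Qed.

Lemma box_digits b m (y : 'I_m -> 'F_b) d a : prime b -> (d <= m)%N -> (a < b ^ d)%N ->
  (((a%:R / (b ^ d)%:R : rat) <= bval b m y) && (bval b m y < a.+1%:R / (b ^ d)%:R))
  <-> (forall i : 'I_m, (i < d)%N -> y i = ((a %/ b ^ (d - i.+1)) %% b)%:R).
Proof.
move=> pb Hdm Ha; have b0 := prime_gt0 pb.
rewrite bval_pre // box_nat // pre_div //; last by move=> i _; apply: ext_lt.
have HY : forall i, (i < d)%N -> (ext y i < b)%N by move=> i _; apply: ext_lt.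
split.
  move/eqP/(@pre_digits b (ext y) d a b0 HY Ha) => H i Hi.
  by apply/eqP; rewrite Fp_eq // modn_mod -H // ext_ord.
move=> H; apply/eqP/(@pre_digits b (ext y) d a b0 HY Ha) => i Hi.
have Him : (i < m)%N by apply: leq_trans Hdm.
have := H (Ordinal Him) Hi; move/eqP; rewrite Fp_eq // modn_mod -ext_ord /=.
by move/eqP.
Qed.



Lemma digit_nat b k l : prime b -> nat_of_ord (digit b k l) = ((k %/ b ^ l) %% b)%N.
Proof. by move=> pb; rewrite /digit (val_Fp_nat pb) modn_mod. Qed.

Lemma digit_zero b k l : (k < b ^ l)%N -> digit b k l = 0.
Proof. by move=> H; rewrite /digit divn_small // mod0n. Qed.

Lemma digits_inj_nat b m i j : (0 < b)%N -> (i < b ^ m)%N -> (j < b ^ m)%N ->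
  (forall l, l < m -> (i %/ b ^ l) %% b = (j %/ b ^ l) %% b)%N -> i = j.
Proof.
move=> b0; elim: m i j => [|m IH] i j Hi Hj H.
  rewrite expn0 in Hi Hj; lia.
have H0 := H 0%N (ltn0Sn _); rewrite expn0 !divn1 in H0.
have Hd : (i %/ b = j %/ b)%N.
  apply: IH; first by rewrite ltn_divLR // -expnSr.
    by rewrite ltn_divLR // -expnSr.
  move=> l Hl; have := H l.+1 Hl; by rewrite expnS !divnMA.
by rewrite (divn_eq i b) (divn_eq j b) Hd H0.
Qed.

Definition dvec b m (k : nat) : 'rV['F_b]_m := \row_(l < m) digit b k l.

Lemma dvec_inj b m : prime b -> injective (fun i : 'I_(b ^ m) => dvec b m i).
Proof.
move=> pb i j /= /rowP E.
apply: val_inj; apply: (@digits_inj_nat b m);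
  [exact: prime_gt0 | exact: ltn_ord | exact: ltn_ord | ].
move=> l Hl; have := E (Ordinal Hl); rewrite !mxE => Ed.
by rewrite -!digit_nat // Ed.
Qed.

Lemma count_transfer b m (P : pred 'rV['F_b]_m) : prime b ->
  #|[set i : 'I_(b ^ m) | P (dvec b m i)]| = #|[set v | P v]|.
Proof.
move=> pb.
have inj := @dvec_inj b m pb.
have onto : forall v : 'rV['F_b]_m, v \in codom (fun i : 'I_(b ^ m) => dvec b m i).
  apply: inj_card_onto => //.
  by rewrite card_mx (card_Fp pb) card_ord mul1n.
rewrite -(card_imset _ inj); apply: eq_card => v.
rewrite in_set; apply/imsetP/idP.
  by case=> i; rewrite in_set => Hi ->.
move=> Pv; have /codomP [i Ei] := onto v.
by exists i => //; rewrite in_set -Ei.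
Qed.

Lemma fiber_count (F : finFieldType) N m (A : 'M[F]_(N, m)) (c : 'rV_N) :
  row_free A -> (#|[set v : 'rV_m | v *m A^T == c]| * #|F| ^ N = #|F| ^ m)%N.
Proof.
move=> fA.
have full : forall c' : 'rV_N, exists u : 'rV_m, u *m A^T = c'.
  move=> c'; have : row_full A^T by rewrite /row_full mxrank_tr.
  move/(submx_full c')/submxP => [D ->]; by exists D.
have fib : forall c', #|[set v : 'rV_m | v *m A^T == c']| = #|[set v : 'rV_m | v *m A^T == 0]|.
  move=> c'; have [u Hu] := full c'.
  symmetry; rewrite -(card_imset _ (addIr u)); apply: eq_card => v.
  rewrite [RHS]in_set; apply/imsetP/eqP.
    by case=> w; rewrite in_set => /eqP Hw ->; rewrite mulmxDl Hw add0r.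
  move=> Hv; exists (v - u); first by rewrite in_set mulmxBl Hv Hu subrr.
  by rewrite subrK.
have tot : #|{: 'rV[F]_m}| = (\sum_(c' : 'rV[F]_N) #|[set v : 'rV_m | v *m A^T == c']|)%N.
  rewrite -sum1_card (partition_big (fun v : 'rV[F]_m => v *m A^T) predT) //=.
  apply: eq_bigr => c' _; rewrite -sum1_card; apply: eq_bigl => v.
  by rewrite in_set.
move: tot; rewrite card_mx mul1n => ->.
rewrite (eq_bigr (fun _ => #|[set v : 'rV_m | v *m A^T == 0]|)); last by move=> ? _; apply: fib.
by rewrite sum_nat_const card_mx mul1n fib mulnC.
Qed.



Lemma tgt_digit b d i0 r : (1 < b)%N -> (i0 < d)%N -> (r < d)%N ->
  ((b ^ (d - i0.+1) %/ b ^ (d - r.+1)) %% b)%N = (r == i0).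
Proof.
move=> b1 Hi Hr; have b0 : (0 < b)%N by lia.
case: (ltngtP r i0) => Hri.
- rewrite divn_small ?mod0n //; rewrite ltn_exp2l //; lia.
- have -> : (d - i0.+1 = (d - r.+1) + (r - i0))%N by lia.
  rewrite expnD mulKn ?expn_gt0 ?b0 //.
  have -> : (r - i0 = (r - i0).-1.+1)%N by lia.
  by rewrite expnS modnMr.
- by rewrite Hri divnn expn_gt0 b0 /= modn_small.
Qed.

Lemma sum_le_one {s : nat} (d : 'I_s -> nat) j : (d j <= \sum_(k < s) d k)%N.
Proof. by rewrite (bigD1 j) //= leq_addr. Qed.

Lemma net_indep b m s t (M : 'I_s -> 'M['F_b]_m) (x : nat -> 'I_s -> rat) d :
  prime b -> is_net b t m s x ->
  (forall (i : 'I_(b ^ m)) j, x i j = dnet_point b m s M i j) ->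
  (\sum_(j < s) d j)%N = (m - t)%N -> rows_indep b m s M d.
Proof.
move=> pb [Htm [_ Hcount]] Hx Hsum.
have b1 : (1 < b)%N by apply: prime_gt1.
have b0 : (0 < b)%N by lia.
have Hdm : forall j, (d j <= m)%N.
  move=> j; have := sum_le_one d j; rewrite Hsum; lia.
split => // c Hc j0 i0 Hi0.
case: (eqVneq (c j0 i0) 0) => // Hne; exfalso.
pose a j := if j == j0 then (b ^ (d j0 - i0.+1))%N else 0%N.
have Ha : forall j, (a j < b ^ d j)%N.
  move=> j; rewrite /a; case: eqP => [->|_]; last by rewrite expn_gt0 b0.
  rewrite ltn_exp2l //; lia.
have := Hcount d a Hsum Ha.
move=> Hc2.
have Hpos : (0 < b ^ t)%N by rewrite expn_gt0 b0.
rewrite -Hc2 card_gt0 in Hpos.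
move/set0Pn: Hpos => [i]; rewrite in_set => /forallP Hbox.
have Hdig : forall j (r : 'I_m), (r < d j)%N ->
    \sum_(l < m) M j r l * digit b i l = (if j == j0 then (r == i0)%:R else 0).
  move=> j r Hr.
  have := Hbox j; rewrite Hx /dnet_point.
  move/(@box_digits b m _ (d j) (a j) pb (Hdm j) (Ha j)) => H; rewrite (H r Hr) /a.
  case: eqP => [Ej|_]; last by rewrite div0n mod0n.
  by rewrite -Ej tgt_digit // Ej.
have E l : \sum_(j < s) \sum_(r < m | (r < d j)%N) c j r * M j r l = 0.
  transitivity ((\sum_(j < s) \sum_(i < m | (i < d j)%N) c j i *: row i (M j)) 0 l);
    last by rewrite Hc mxE.
  rewrite summxE.
  apply: eq_bigr => j _; rewrite summxE; apply: eq_bigr => r _; by rewrite !mxE.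
have K : \sum_(j < s) \sum_(r < m | (r < d j)%N) c j r * (\sum_(l < m) M j r l * digit b i l) = 0.
  transitivity (\sum_(l < m) (\sum_(j < s) \sum_(r < m | (r < d j)%N) c j r * M j r l) * digit b i l);
    last by apply: big1 => l _; rewrite E mul0r.
  under eq_bigr do under eq_bigr do rewrite big_distrr.
  under [RHS]eq_bigr do rewrite big_distrl.
  under [RHS]eq_bigr do under eq_bigr do rewrite big_distrl.
  rewrite [RHS]exchange_big; apply: eq_bigr => j _; rewrite [RHS]exchange_big.
  apply: eq_bigr => r _; apply: eq_bigr => l _; exact: mulrA.
have K2 : \sum_(j < s) \sum_(r < m | (r < d j)%N) c j r * (if j == j0 then (r == i0)%:R else 0) = 0.
  rewrite -[RHS]K; apply: eq_bigr => j _; apply: eq_bigr => r Hr; by rewrite Hdig.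
move: K2; rewrite (bigD1 j0) //= eqxx (bigD1 i0) //= eqxx mulr1.
rewrite big1; last by move=> r /andP [_ Hr]; rewrite (negbTE Hr) mulr0.
rewrite big1; last by move=> j Hj; rewrite (negbTE Hj); apply: big1 => r _; rewrite mulr0.
by rewrite !addr0 => H; move: Hne; rewrite H eqxx.
Qed.



Lemma card_S s m (d : 'I_s -> nat) : (forall j, d j <= m)%N ->
  #|[set p : 'I_s * 'I_m | (p.2 < d p.1)%N]| = (\sum_(j < s) d j)%N.
Proof.
move=> Hd.
rewrite -sum1_card.
rewrite (eq_bigl (fun p : 'I_s * 'I_m => true && (p.2 < d p.1)%N)); last by move=> p; rewrite in_set.
rewrite -(pair_big_dep xpredT (fun j (r : 'I_m) => (r < d j)%N) (fun _ _ => 1%N)) /=.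
apply: eq_bigr => j _.
rewrite (big_ord_narrow (Hd j)) sum1_card card_ord //.
Qed.

Lemma indep_net b m s t (M : 'I_s -> 'M['F_b]_m) : prime b -> (t <= m)%N ->
  (forall d, (\sum_(j < s) d j)%N = (m - t)%N -> rows_indep b m s M d) ->
  is_net b t m s (dnet_point b m s M).
Proof.
move=> pb Htm Hind.
have b0 := prime_gt0 pb.
split => //; split.
  move=> i j _; exact: bval_range.
move=> d a Hsum Ha.
have [Hdm Hli] := Hind d Hsum.
set S := [set p : 'I_s * 'I_m | (p.2 < d p.1)%N].
have HN : #|S| = (m - t)%N by rewrite card_S // Hsum.
pose A := \matrix_(q < #|S|, l < m) M (enum_val q).1 (enum_val q).2 l.
pose tgt (j : 'I_s) (r : 'I_m) : 'F_b := ((a j %/ b ^ (d j - r.+1)) %% b)%:R.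
pose c0 := \row_(q < #|S|) tgt (enum_val q).1 (enum_val q).2.
have fA : row_free A.
  apply: inj_row_free => w Hw; apply/rowP => q; rewrite mxE.
  pose cc (j : 'I_s) (r : 'I_m) := \sum_(q' | enum_val q' == (j, r)) w 0 q'.
  have Hsum' : \sum_(j < s) \sum_(r < m | (r < d j)%N) cc j r *: row r (M j) = 0.
    rewrite -[RHS]Hw mulmx_sum_row.
    under eq_bigr do under eq_bigr do rewrite scaler_suml.
    rewrite (pair_big_dep xpredT (fun j (r : 'I_m) => (r < d j)%N)
       (fun j r => \sum_(q' | enum_val q' == (j, r)) w 0 q' *: row r (M j))) /=.
    rewrite (partition_big (fun q : 'I_#|S| => enum_val q) (fun p => (p.2 < d p.1)%N)) /=.
      apply: eq_big => [[j r] //|[j r] _ /=].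
      apply: eq_big => [q' //|q' /eqP Eq].
      congr (_ *: _); apply/rowP => l; by rewrite !mxE Eq.
    move=> q' _; have := enum_valP q'; by rewrite in_set.
  have Hq := enum_valP q; rewrite in_set in Hq.
  have := Hli cc Hsum' (enum_val q).1 (enum_val q).2 Hq.
  rewrite /cc -surjective_pairing (big_pred1 q) // => q'.
  by rewrite (inj_eq enum_val_inj).
have Hset : [set i : 'I_(b ^ m) | [forall j : 'I_s,
         ((a j)%:R / (b ^ d j)%:R <= dnet_point b m s M i j) &&
         (dnet_point b m s M i j < (a j).+1%:R / (b ^ d j)%:R)]] =
     [set i : 'I_(b ^ m) | dvec b m i *m A^T == c0].
  apply/setP => i; rewrite !in_set.
  apply/forallP/eqP.
    move=> H; apply/rowP => q; rewrite !mxE.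
    have Hq := enum_valP q; rewrite in_set in Hq.
    have := H (enum_val q).1; rewrite /dnet_point.
    move/(@box_digits b m _ (d (enum_val q).1) (a (enum_val q).1) pb (Hdm _) (Ha _)) => Hd'.
    rewrite /tgt -(Hd' _ Hq); apply: eq_bigr => l _; by rewrite !mxE mulrC.
  move=> H j; apply/(@box_digits b m _ (d j) (a j) pb (Hdm j) (Ha j)) => r Hr.
  have Hjr : (j, r) \in S by rewrite in_set.
  have := congr1 (fun X : 'rV_#|S| => X 0 (enum_rank_in Hjr (j, r))) H.
  rewrite !mxE (enum_rankK_in Hjr Hjr) /= => E.
  rewrite -[RHS]/(tgt j r) -E.
  apply: eq_bigr => l _; by rewrite !mxE (enum_rankK_in Hjr Hjr) mulrC.
rewrite Hset (@count_transfer b m (fun v : 'rV_m => v *m A^T == c0) pb).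
have := @fiber_count _ _ _ A c0 fA; rewrite (card_Fp pb) [X in (b ^ X)%N]HN.
have -> : (b ^ m = b ^ t * b ^ (m - t))%N by rewrite -expnD subnKC.
by move/eqP; rewrite eqn_pmul2r ?expn_gt0 ?b0 // => /eqP.
Qed.



Lemma ex_max (P : nat -> Prop) (N : nat) : P 0%N -> (forall r, P r -> (r <= N)%N) ->
  exists r, P r /\ forall r', P r' -> (r' <= r)%N.
Proof.
move=> P0 HN.
suff H : forall k r, P r -> (N - r <= k)%N -> exists r0, P r0 /\ forall r', P r' -> (r' <= r0)%N.
  apply: (H N 0%N P0); lia.
elim=> [|k IH] r Pr Hk.
  exists r; split => // r' Pr'; have := HN r' Pr'; lia.
case: (classic (exists r'', P r'' /\ (r < r'')%N)) => [[r'' [Pr'' Hr'']]|Hn].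
  apply: (IH r'' Pr''); have := HN r'' Pr''; lia.
exists r; split => // r' Pr'; case: (leqP r' r) => // Hlt; exfalso; apply: Hn; by exists r'.
Qed.

Lemma ex_min (P : nat -> Prop) (n : nat) : P n ->
  exists k, P k /\ forall k', P k' -> (k <= k')%N.
Proof.
suff H : forall n0 k, (k <= n0)%N -> P k -> exists k0, P k0 /\ forall k', P k' -> (k0 <= k')%N.
  move=> Pn; exact: (H n n (leqnn n) Pn).
clear n; elim=> [|n IH] k Hk Pk.
  exists k; split => // k' _; lia.
case: (classic (exists k', P k' /\ (k' <= n)%N)) => [[k' [Pk' Hk']]|Hn].
  exact: (IH k' Hk' Pk').
exists k; split => // k' Pk'; case: (leqP k k') => // Hlt; exfalso.
apply: Hn; exists k'; split => //; lia.
Qed.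

Lemma rows_indep_zero b m s (M : 'I_s -> 'M['F_b]_m) d :
  (\sum_(j < s) d j)%N = 0%N -> rows_indep b m s M d.
Proof.
move=> H0.
have Hz : forall j, d j = 0%N by move=> j; have := sum_le_one d j; rewrite H0; lia.
split=> [j|c _ j i]; rewrite Hz //.
Qed.

Lemma sum_ind {s} (j0 : 'I_s) (r : nat) : (\sum_(j < s) (if j == j0 then r else 0%N))%N = r.
Proof. by rewrite (bigD1 j0) //= eqxx big1 ?addn0 // => j /negbTE ->. Qed.

Lemma rho_exists b m s (M : 'I_s -> 'M['F_b]_m) : (0 < s)%N -> exists r, is_rho b m s M r.
Proof.
move=> s0; apply: (@ex_max _ m).
  by move=> d Hd; apply: rows_indep_zero.
move=> r Hr; pose j0 : 'I_s := Ordinal s0.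
have [Hdm _] := Hr (fun j => if j == j0 then r else 0%N) (sum_ind j0 r).
by have := Hdm j0; rewrite eqxx.
Qed.

Lemma eq_bval b m (y1 y2 : 'I_m -> 'F_b) : (forall i, y1 i = y2 i) -> bval b m y1 = bval b m y2.
Proof. by move=> H; rewrite /bval; apply: eq_bigr => i _; rewrite H. Qed.

Lemma sum_trunc (R : zmodType) (F : nat -> R) k n : (forall l, (k <= l)%N -> F l = 0) -> (k <= n)%N ->
  \sum_(l < n) F l = \sum_(l < k) F l.
Proof.
move=> H Hkn.
rewrite -!(big_mkord xpredT) (big_cat_nat (leq0n k) Hkn) /=.
rewrite [X in _ + X]big1_seq ?addr0 // => l /andP [_].
by rewrite mem_index_iota => /andP [Hl _]; apply: H.
Qed.

Lemma indep_mono b m m' s (M : 'I_s -> 'M['F_b]_m) (N : 'I_s -> 'M['F_b]_m') (d d' : 'I_s -> nat)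
  (Hmm : (m' <= m)%N) :
  (forall j, d j <= d' j)%N -> (forall j, d j <= m')%N ->
  rows_indep b m' s N d' ->
  (forall j (i l : 'I_m'), (i < d j)%N -> M j (widen_ord Hmm i) (widen_ord Hmm l) = N j i l) ->
  rows_indep b m s M d.
Proof.
move=> Hdd Hdm [_ Hind] HMN.
split=> [j|c Hc j i Hi]; first by apply: leq_trans (Hdm j) Hmm.
pose c' j (i' : 'I_m') := if (i' < d j)%N then c j (widen_ord Hmm i') else 0.
have Hc' : \sum_(j < s) \sum_(i' < m' | (i' < d' j)%N) c' j i' *: row i' (N j) = 0.
  apply/rowP => l; rewrite summxE mxE.
  transitivity ((\sum_(j < s) \sum_(i < m | (i < d j)%N) c j i *: row i (M j)) 0 (widen_ord Hmm l));
    last by rewrite Hc mxE.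
  rewrite summxE; apply: eq_bigr => jj _; rewrite !summxE.
  under eq_bigr do rewrite !mxE.
  under [RHS]eq_bigr do rewrite !mxE.
  rewrite (big_mkcond (fun i' : 'I_m' => (i' < d' jj)%N)).
  rewrite (eq_bigr (fun i' : 'I_m' => if (i' < d jj)%N then c jj (widen_ord Hmm i') * M jj (widen_ord Hmm i') (widen_ord Hmm l) else 0)); last first.
    move=> i' _; rewrite /c'; case: (ltnP i' (d jj)) => Hi'.
      by rewrite (leq_trans Hi' (Hdd jj)) HMN.
    by case: ifP; rewrite ?mul0r.
  rewrite -big_mkcond (big_ord_narrow (Hdm jj)).
  rewrite (big_ord_narrow (leq_trans (Hdm jj) Hmm)).
  by apply: eq_bigr => k _; congr (c jj _ * M jj _ _); apply: val_inj.
have Hi' : (i < m')%N by apply: leq_trans Hi (Hdm j).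
have := Hind c' Hc' j (Ordinal Hi') (leq_trans Hi (Hdd j)).
rewrite /c' /= Hi.
by have -> : widen_ord Hmm (Ordinal Hi') = i by apply: val_inj.
Qed.



Theorem mainTheorem4 (b s m t : nat) (C : 'I_s -> nat -> nat -> 'F_b)
    (wr wc : nat -> nat) :
  prime b -> (0 < s)%N -> is_digital_ts_seq b t s C -> (t <= m)%N ->
  wr 1%N = 0%N -> wc 1%N = 0%N ->
  (forall i j, (1 <= i)%N -> (i <= j)%N -> (j <= s)%N -> (wr i <= wr j)%N) ->
  (forall i j, (1 <= i)%N -> (i <= j)%N -> (j <= s)%N -> (wc i <= wc j)%N) ->
  let Ct := fun j : 'I_s => reduce b m (upleft b s m C j) (wr j.+1) (wc j.+1) in
  ((exists r, is_rho b m s Ct r) /\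
   forall r, is_rho b m s Ct r ->
     (maxn 0 (m - maxn (wc s + t) (wr s)) <= r <= maxn 0 (m - maxn (wc s) (wr s)))%N) /\
  ((exists tt, is_min_quality b m s (dnet_point b m s Ct) tt) /\
   forall tt, is_min_quality b m s (dnet_point b m s Ct) tt ->
     (tt <= minn m (maxn (wc s + t) (wr s)))%N).
Proof.
move=> pb s0 Hseq Htm wr1 wc1 Hwr Hwc Ct.
have b0 := prime_gt0 pb; have b1 := prime_gt1 pb.
have Hwrj : forall j : 'I_s, (wr j.+1 <= wr s)%N by move=> j; apply: Hwr.
have Hwcj : forall j : 'I_s, (wc j.+1 <= wc s)%N by move=> j; apply: Hwc.
set L := (m - maxn (wc s + t) (wr s))%N.
have rhoL : rho_ok b m s Ct L.
  move=> d Hd.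
  case: (leqP t (m - wc s)) => Hm'; last first.
    apply: rows_indep_zero; rewrite Hd /L; lia.
  set m' := (m - wc s)%N in Hm'.
  have Hmm : (m' <= m)%N by apply: leq_subr.
  pose j0 : 'I_s := Ordinal s0.
  pose d' j := (d j + (j == j0) * (m' - t - L))%N.
  have HdL : (L <= m' - t)%N by rewrite /L /m'; lia.
  have Hsum' : (\sum_(j < s) d' j)%N = (m' - t)%N.
    rewrite big_split /= Hd.
    have -> : (\sum_(j < s) (j == j0) * (m' - t - L))%N = (m' - t - L)%N.
      by rewrite (bigD1 j0) //= mul1n big1 ?addn0 // => j /negbTE ->.
    lia.
  have Hnet := Hseq m' Hm' 0%N.
  have Hind' : rows_indep b m' s (upleft b s m' C) d'.
    apply: (@net_indep b m' s t _ _ d' pb Hnet) => // i j.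
    rewrite /dseq_point_trunc /dnet_point mul0n add0n; apply: eq_bval => r.
    under [RHS]eq_bigr do rewrite mxE.
    have F1 : forall l, (m' <= l)%N -> C j r l * digit b i l = 0.
      move=> l Hl; rewrite digit_zero ?mulr0 //.
      apply: leq_trans (ltn_ord i) _; exact: leq_pexp2l.
    have F2 : forall l, (i.+1 <= l)%N -> C j r l * digit b i l = 0.
      move=> l Hl; rewrite digit_zero ?mulr0 //.
      apply: leq_trans (ltn_expl i b1) _; apply: leq_pexp2l => //; lia.
    case: (leqP m' i.+1) => H.
      by rewrite (@sum_trunc _ (fun l => C j r l * digit b i l) m' i.+1 F1 H).
    by rewrite [RHS](@sum_trunc _ (fun l => C j r l * digit b i l) i.+1 m' F2 (ltnW H)).
  apply: (@indep_mono b m m' s Ct (upleft b s m' C) d d' Hmm) => //.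
  - by move=> j; apply: leq_addr.
  - by move=> j; have := sum_le_one d j; rewrite Hd; lia.
  - move=> j i l Hi; rewrite /Ct /reduce !mxE /=.
    have H1 : (i < m - wr j.+1)%N.
      have := sum_le_one d j; have := Hwrj j; rewrite Hd /L; lia.
    have H2 : (l < m - wc j.+1)%N.
      have := ltn_ord l; have := Hwcj j; rewrite /m'; lia.
    by rewrite H1 H2.
have Hjl : (s.-1 < s)%N by lia.
pose jl : 'I_s := Ordinal Hjl.
have Ejl : (jl.+1 = s)%N by rewrite /= prednK.
split.
  split; first exact: rho_exists.
  move=> r [Hok Hmax].
  have HLr : (L <= r)%N by apply: Hmax.
  pose dl j := if j == jl then r else 0%N.
  have [Hrm Hli] := Hok dl (sum_ind jl r).
  have Hrm' : (r <= m)%N by have := Hrm jl; rewrite /dl eqxx.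
  have Hrow : (r <= m - wr s)%N.
    case: (leqP r (m - wr s)) => // Hlt; exfalso.
    have Hi0 : (m - wr s < m)%N by lia.
    pose i0 : 'I_m := Ordinal Hi0.
    pose c j (i : 'I_m) : 'F_b := if (j == jl) && (i == i0) then 1 else 0.
    have Hc : \sum_(j < s) \sum_(i < m | (i < dl j)%N) c j i *: row i (Ct j) = 0.
      apply: big1 => j _; apply: big1 => i _; rewrite /c.
      case: andP => [[/eqP -> /eqP ->]|_]; last by rewrite scale0r.
      rewrite scale1r; apply/rowP => l; rewrite /Ct /reduce !mxE /= Ejl ltnn //.
    have := Hli c Hc jl i0; rewrite /dl /c !eqxx /= => H.
    by move: (H Hlt) => /eqP; rewrite oner_eq0.
  have Hcol : (r <= m - wc s)%N.
    case: (leqP r (m - wc s)) => // Hlt; exfalso.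
    set k := (m - wc s)%N in Hlt.
    pose B := \matrix_(i < r, l < m) Ct jl (widen_ord Hrm' i) l.
    have HB : (\rank B <= k)%N.
      have -> : B = B *m pid_mx k.
        apply/matrixP => i l; rewrite [RHS]mxE (bigD1 l) //= big1; last first.
          move=> l' Hl'; move: Hl'; rewrite -(inj_eq val_inj) => /negbTE Hv.
          by rewrite [pid_mx _ _ _]mxE Hv /= mulr0.
        rewrite [pid_mx _ _ _]mxE eqxx /= addr0.
        case: (ltnP l k) => Hl; first by rewrite mulr1.
        rewrite mulr0 /B /Ct /reduce !mxE.
        have -> : (l < m - wc jl.+1)%N = false by apply/negbTE; rewrite -leqNgt Ejl.
        by rewrite andbF.
      apply: leq_trans (mxrankM_maxr _ _) _; rewrite rank_pid_mx //; lia.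
    have Hker : (0 < \rank (kermx B))%N by rewrite mxrank_ker; lia.
    have Hne : kermx B != 0 by rewrite -mxrank_eq0 -lt0n.
    have [q Hq] : exists q, row q (kermx B) != 0.
      case: (pickP (fun q => row q (kermx B) != 0)) => [q Hq|H]; first by exists q.
      exfalso; move/eqP: Hne; apply.
      apply/row_matrixP => q; rewrite row0; exact/eqP/negbFE/H.
    set w := row q (kermx B) in Hq.
    have Hw : w *m B = 0 by rewrite /w -row_mul mulmx_ker row0.
    have [q' Hq'] : exists q', w 0 q' != 0.
      case: (pickP (fun q' => w 0 q' != 0)) => [q' Hq'|H]; first by exists q'.
      exfalso; move/eqP: Hq; apply.
      apply/rowP => q'; rewrite [RHS]mxE; exact/eqP/negbFE/H.
    pose c j (i : 'I_m) : 'F_b := if j == jl then w 0 (insubd q (val i)) else 0.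
    have Hc : \sum_(j < s) \sum_(i < m | (i < dl j)%N) c j i *: row i (Ct j) = 0.
      rewrite (bigD1 jl) //= [X in _ + X]big1 ?addr0; last first.
        by move=> j /negbTE Hj; apply: big1 => i _; rewrite /c Hj scale0r.
      rewrite /dl eqxx (big_ord_narrow Hrm').
      rewrite -[RHS]Hw mulmx_sum_row; apply: eq_bigr => i _.
      rewrite /c eqxx; congr (_ *: _).
        by congr (w 0 _); apply: val_inj; rewrite val_insubd /= ltn_ord.
      by apply/rowP => l; rewrite !mxE.
    have := Hli c Hc jl (widen_ord Hrm' q'); rewrite /dl /c eqxx /= ltn_ord => /(_ isT) H.
    have E : forall x : 'I_r, insubd q (x : nat) = x.
      by move=> x; apply: val_inj; rewrite val_insubd /= ltn_ord.
    by move: Hq'; rewrite -[X in w 0 X](E q') H eqxx.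
  rewrite !max0n HLr /=; lia.
set T := minn m (maxn (wc s + t) (wr s)).
have HnetT : is_net b T m s (dnet_point b m s Ct).
  apply: (@indep_net b m s T Ct pb); first exact: geq_minl.
  move=> d Hd; apply: rhoL; rewrite Hd /T /L; lia.
split.
  have [tt [Htt Hmin]] := @ex_min (fun t0 => is_net b t0 m s (dnet_point b m s Ct)) T HnetT.
  by exists tt; split.
by move=> tt [_ Hmin]; apply: Hmin.
Qed.
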